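(* In the setting of the context, let $M:\mathbb C^n\to\mathbb C^n$ be an invertible linear map and $\tau_M:=M\tau$; for $(\Pi',\Theta')\in\mathcal E(\mathbb C^n)$ let $A_M^{\Pi',\Theta'}$ be the operator defined like $A^{\Pi',\Theta'}$ but with $\tau$ replaced by $\tau_M$ (and $G_0$ replaced by $(\tau_M A^{-1})^*$). Given $(\Pi,\Theta)\in\mathcal E(\mathbb C^n)$, let $\Pi_M$ be the orthogonal projector onto $(M^* )^{-1}(\mathbb C^n_\Pi)$ and $\Theta_M:=\Pi_MM\Pi\Theta\Pi M^*\Pi_M$ on $\mathbb C^n_{\Pi_M}$. Then $A_M^{\Pi_M,\Theta_M}=A^{\Pi,\Theta}$.
   Context: $\mathcal H$ is a Hilbert space, $S$ a closed symmetric operator on $\mathcal H$ with $-S>0$ and finite deficiency indices $(n,n)$, $n\ge1$, and $A$ a self-adjoint extension of $S$ with $-A>0$ (e.g. the Friedrichs extension), so $0\in\rho(A)$. $\tau:D(A)\to\mathbb C^n$ is a surjective linear map, bounded for the graph norm of $A$, with $\ker\tau$ dense in $\mathcal H$ and $S=A|_{\ker\tau}$. For $z\in\rho(A)$, $G_z:=(\tau(-A+\bar z)^{-1})^*:\mathbb C^n\to\mathcal H$. $\mathcal E(\mathbb C^n)$ is the set of pairs $(\Pi,\Theta)$ with $\Pi$ an orthogonal projector on $\mathbb C^n$ and $\Theta$ a symmetric operator on $\mathbb C^n_\Pi:=\mathrm{Ran}\,\Pi$ ($\Pi$ also denotes the inclusion $\mathbb C^n_\Pi\to\mathbb C^n$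 and its adjoint). For $(\Pi,\Theta)\in\mathcal E(\mathbb C^n)$, $A^{\Pi,\Theta}\phi:=A\phi_0$ on $D(A^{\Pi,\Theta}):=\{\phi=\phi_0+G_0\xi:\ \phi_0\in D(A),\ \xi\in\mathbb C^n_\Pi,\ \Pi\tau\phi_0=\Theta\xi\}$. *)

(* Defs.v *)
(* Unbounded operators are given by a domain predicate
   and a function (values outside the domain are irrelevant); operators
   are compared through their graphs. *)
From mathcomp Require Import all_boot all_order all_algebra.
From mathcomp Require Import complex reals.
Set Implicit Arguments. Unset Strict Implicit. Unset Printing Implicit Defensive.
Import Order.TTheory GRing.Theory Num.Theory.
Local Open Scope ring_scope.

Section Hilbert.
Variable R : realType.
Local Notation C := R[i].
Variable H : lmodType C.
Variable ip : H -> H -> C.   (* inner product, linear in the first argument *)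

Definition hnorm (x : H) : C := sqrtC (ip x x).

Definition converges (u : nat -> H) (l : H) : Prop :=
  forall e : C, 0 < e -> exists N : nat, forall k, (N <= k)%N -> hnorm (u k - l) < e.

Definition is_hilbert : Prop :=
  [/\ (forall (a : C) (x y z : H), ip (a *: x + y) z = a * ip x z + ip y z),
      (forall x y : H, ip y x = (ip x y)^*),
      (forall x : H, 0 <= ip x x),
      (forall x : H, ip x x = 0 -> x = 0) &
      (forall u : nat -> H,
         (forall e : C, 0 < e -> exists N : nat, forall m k, (N <= m)%N -> (N <= k)%N ->
             hnorm (u m - u k) < e) ->
         exists l, converges u l)].

Definition linear_on (D : H -> Prop) (f : H -> H) : Prop :=
  [/\ D 0,
      (forall (a : C) x y, D x -> D y -> D (a *: x + y)) &
      (forall (a : C) x y, D x -> D y -> f (a *: x + y) = a *: f x + f y)].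

Definition dense (D : H -> Prop) : Prop :=
  forall x : H, forall e : C, 0 < e -> exists y, D y /\ hnorm (x - y) < e.

Definition adj_graph (D : H -> Prop) (f : H -> H) (psi eta : H) : Prop :=
  forall phi, D phi -> ip (f phi) psi = ip phi eta.

Definition closed_op (D : H -> Prop) (f : H -> H) : Prop :=
  forall (u : nat -> H) (x y : H), (forall k, D (u k)) ->
    converges u x -> converges (fun k => f (u k)) y -> D x /\ f x = y.

Definition symmetric_op (D : H -> Prop) (f : H -> H) : Prop :=
  dense D /\ forall phi psi, D phi -> D psi -> ip (f phi) psi = ip phi (f psi).

Definition self_adjoint (D : H -> Prop) (f : H -> H) : Prop :=
  dense D /\ forall psi eta, adj_graph D f psi eta <-> (D psi /\ eta = f psi).

Definition neg_strictly_positive (D : H -> Prop) (f : H -> H) : Prop :=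
  exists c : C, 0 < c /\ forall phi, D phi -> c * ip phi phi <= ip (- f phi) phi.

Definition subspace_dim (P : H -> Prop) (n : nat) : Prop :=
  exists v : 'I_n -> H,
    [/\ forall i, P (v i),
        (forall c : 'I_n -> C, \sum_i c i *: v i = 0 -> forall i, c i = 0) &
        (forall x, P x -> exists c : 'I_n -> C, x = \sum_i c i *: v i)].

Definition deficiency_indices (D : H -> Prop) (f : H -> H) (n : nat) : Prop :=
  subspace_dim (fun psi => adj_graph D f psi ('i *: psi)) n /\
  subspace_dim (fun psi => adj_graph D f psi (- ('i *: psi))) n.

End Hilbert.

Section Cn.
Variable R : realType.
Local Notation C := R[i].

Definition ipn (n : nat) (u v : 'cV[C]_n) : C := \sum_i u i 0 * (v i 0)^*.
Definition vnorm (n : nat) (u : 'cV[C]_n) : C := sqrtC (ipn u u).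

Definition adjmx (n : nat) (M : 'M[C]_n) : 'M[C]_n := (map_mx Num.conj M)^T.

Definition orth_proj (n : nat) (P : 'M[C]_n) : Prop :=
  P *m P = P /\ adjmx P = P.

(* A symmetric operator Theta on C^n_Pi = Ran Pi, encoded as the matrix on
   C^n that equals Pi Theta Pi (i.e. vanishes on (Ran Pi)^perp) *)
Definition sym_on_range (n : nat) (P T : 'M[C]_n) : Prop :=
  T = P *m T *m P /\ adjmx T = T.

Definition in_E (n : nat) (P T : 'M[C]_n) : Prop := orth_proj P /\ sym_on_range P T.
End Cn.

(* Graph of A^{Pi,Theta} built from (D(A), A), the trace map tau and G_0:
   { (phi_0 + G_0 xi, A phi_0) : phi_0 in D(A), xi in Ran Pi, Pi tau phi_0 = Theta xi } *)
Definition ext_graph (R : realType) (H : lmodType R[i]) (n : nat)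
  (DA : H -> Prop) (A : H -> H) (tau : H -> 'cV[R[i]]_n) (G0 : 'cV[R[i]]_n -> H)
  (P T : 'M[R[i]]_n) (phi psi : H) : Prop :=
  exists (phi0 : H) (xi : 'cV[R[i]]_n),
    [/\ DA phi0, P *m xi = xi, P *m tau phi0 = T *m xi,
        phi = phi0 + G0 xi & psi = A phi0].

(* Main.v *)
Require Import Defs.
From mathcomp Require Import all_boot all_order all_algebra.
From mathcomp Require Import complex reals.
Import Order.TTheory GRing.Theory Num.Theory.
Local Open Scope ring_scope.
Section S. Variable R : realType.
Lemma adjmxM n (A B : 'M[R[i]]_n) : adjmx (A *m B) = adjmx B *m adjmx A.
Proof. by rewrite /adjmx map_mxM trmx_mul. Qed.
Lemma adjmxK n (A : 'M[R[i]]_n) : adjmx (adjmx A) = A.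
Proof. by apply/matrixP=> i j; rewrite !mxE conjCK. Qed.
Lemma adjmx1 n : adjmx (1%:M : 'M[R[i]]_n) = 1%:M.
Proof. apply/matrixP=> i j; rewrite !mxE eq_sym; case: (i == j); by rewrite ?conjC1 ?conjC0. Qed.
Lemma ipn_adj n (M : 'M[R[i]]_n) xi v : ipn xi (M *m v) = ipn (adjmx M *m xi) v.
Proof.
rewrite /ipn. under eq_bigr do rewrite !mxE rmorph_sum big_distrr.
under [RHS]eq_bigr do rewrite !mxE big_distrl.
rewrite exchange_big; apply: eq_bigr => i _; apply: eq_bigr => j _.
by rewrite !mxE /= rmorphM mulrA [xi j 0 * _]mulrC.
Qed.
Lemma mx_ext n (X Y : 'M[R[i]]_n) : (forall v : 'cV_n, X *m v = Y *m v) -> X = Y.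
Proof.
move=> h; apply/matrixP=> i j.
have := congr1 (fun A : 'cV_n => A i 0) (h (delta_mx j 0)).
by rewrite -!colE !mxE.
Qed.
Lemma ip_eq (H : lmodType R[i]) (ip : H -> H -> R[i]) x y :
  is_hilbert ip -> (forall z, ip x z = ip y z) -> x = y.
Proof.
case=> lin _ _ def _ h; apply/eqP; rewrite -subr_eq0; apply/eqP/def.
have h0 : forall z, ip (x - y) z = 0.
  move=> z; have -> : x - y = (-1) *: y + x by rewrite scaleN1r addrC.
  by rewrite lin h mulN1r addNr.
exact: h0.
Qed.
End S.

Theorem lemma4p4
  (R : realType) (H : lmodType R[i]) (ip : H -> H -> R[i]) (n : nat)
  (DA : H -> Prop) (A : H -> H) (Ainv : H -> H)
  (tau : H -> 'cV[R[i]]_n) (G0 : 'cV[R[i]]_n -> H)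
  (M : 'M[R[i]]_n) (G0M : 'cV[R[i]]_n -> H)
  (P T PM : 'M[R[i]]_n) :
  (* Hilbert space, n >= 1 *)
  is_hilbert ip -> (1 <= n)%N ->
  (* A self-adjoint with -A > 0, and its inverse A^{-1} (0 in rho(A)) *)
  linear_on DA A -> self_adjoint ip DA A -> neg_strictly_positive ip DA A ->
  (forall psi, DA (Ainv psi) /\ A (Ainv psi) = psi) ->
  (forall phi, DA phi -> Ainv (A phi) = phi) ->
  (* tau : D(A) -> C^n linear, surjective, graph-norm bounded, dense kernel *)
  (forall (a : R[i]) x y, DA x -> DA y -> tau (a *: x + y) = a *: tau x + tau y) ->
  (forall v : 'cV[R[i]]_n, exists phi, DA phi /\ tau phi = v) ->
  (exists c : R[i], 0 < c /\ forall phi, DA phi ->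
      vnorm (tau phi) <= c * (hnorm ip phi + hnorm ip (A phi))) ->
  dense ip (fun phi => DA phi /\ tau phi = 0) ->
  (* S := A restricted to ker tau: closed, symmetric, -S > 0, indices (n,n) *)
  closed_op ip (fun phi => DA phi /\ tau phi = 0) A ->
  symmetric_op ip (fun phi => DA phi /\ tau phi = 0) A ->
  neg_strictly_positive ip (fun phi => DA phi /\ tau phi = 0) A ->
  deficiency_indices ip (fun phi => DA phi /\ tau phi = 0) A n ->
  (* G_0 = (tau (-A)^{-1})^* *)
  (forall (xi : 'cV[R[i]]_n) (psi : H), ip (G0 xi) psi = ipn xi (tau (- Ainv psi))) ->
  (* M invertible, tau_M := M tau, G^M_0 = (tau_M (-A)^{-1})^* *)
  M \in unitmx ->
  (forall (xi : 'cV[R[i]]_n) (psi : H),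
      ip (G0M xi) psi = ipn xi (M *m tau (- Ainv psi))) ->
  (* (Pi, Theta) in E(C^n) *)
  in_E P T ->
  (* Pi_M = orthogonal projector onto (adj M)^{-1}(Ran Pi) *)
  orth_proj PM ->
  (forall v : 'cV[R[i]]_n,
      PM *m v = v <-> exists u, P *m u = u /\ v = invmx (adjmx M) *m u) ->
  (* A_M^{Pi_M, Theta_M} = A^{Pi, Theta}, Theta_M = Pi_M M Pi Theta Pi (adj M) Pi_M *)
  forall phi psi : H,
    ext_graph DA A (fun x => M *m tau x) G0M PM
      (PM *m M *m P *m T *m P *m adjmx M *m PM) phi psi
    <-> ext_graph DA A tau G0 P T phi psi.
Proof.
move=> hil _ _ _ _ _ _ _ _ _ _ _ _ _ _ hG0 Mu hG0M [[hPP hPa] [hT _]] [hPMPM hPMa] hPM phi psi.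
set K := adjmx M. set N := invmx K.
have KU : K \in unitmx.
  have : adjmx (invmx M) *m K = 1%:M by rewrite /K -adjmxM mulmxV // adjmx1.
  by case/mulmx1_unit.
have hPK : forall v : 'cV_n, PM *m v = v -> P *m (K *m v) = K *m v.
  move=> v hv; have [u [Pu ->]] := proj1 (hPM v) hv; by rewrite -/K [K *m _]mulmxA mulmxV // mul1mx.
have hPMN : forall u : 'cV_n, P *m u = u -> PM *m (N *m u) = N *m u.
  move=> u Pu; apply/(proj2 (hPM _)); by exists u.
have A1 : P *m K *m PM = K *m PM.
  apply: mx_ext => v; rewrite -!mulmxA; apply: hPK; by rewrite mulmxA hPMPM.
have A2 : PM *m N *m P = N *m P.
  apply: mx_ext => v; rewrite -!mulmxA; apply: hPMN; by rewrite mulmxA hPP.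
have B1 : PM *m M *m P = PM *m M.
  by have := congr1 (@adjmx _ _) A1; rewrite !adjmxM hPMa hPa /K adjmxK mulmxA.
set X := adjmx N.
have B2 : P *m X *m PM = P *m X.
  by have := congr1 (@adjmx _ _) A2; rewrite !adjmxM hPMa hPa mulmxA.
have XM : X *m M = 1%:M.
  apply: mulmx1C; have := congr1 (@adjmx _ _) (mulVmx KU).
  by rewrite adjmxM adjmx1 /K adjmxK.
have key : forall w : 'cV_n, PM *m (M *m w) = 0 <-> P *m w = 0.
  move=> w; split=> h.
    by rewrite -[w]mul1mx -XM -mulmxA mulmxA -B2 -!mulmxA h !mulmx0.
  by rewrite mulmxA -B1 -mulmxA h mulmx0.
have hG : forall xi : 'cV_n, G0M xi = G0 (K *m xi).
  move=> xi; apply: (@ip_eq _ _ ip _ _ hil) => z; by rewrite hG0M hG0 ipn_adj.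
have hPT : P *m T = T by rewrite {1}hT !mulmxA hPP -hT.
have hTh : forall xi : 'cV_n, PM *m xi = xi ->
    (PM *m M *m P *m T *m P *m adjmx M *m PM) *m xi = PM *m (M *m (T *m (K *m xi))).
  move=> xi h; rewrite -!mulmxA h -/K.
  by rewrite [in RHS]hT !mulmxA.
split.
  case=> phi0 [xi [D0 PMxi eqn -> ->]].
  exists phi0, (K *m xi); split => //; first exact: hPK.
    move: eqn; rewrite hTh // => /eqP; rewrite -subr_eq0 -mulmxBr -mulmxBr => /eqP.
    move/key; rewrite mulmxBr [P *m (T *m _)]mulmxA hPT => /eqP; rewrite subr_eq0 => /eqP //.
  by rewrite hG.
case=> phi0 [xi [D0 Pxi eqn -> ->]].
have KN : K *m (N *m xi) = xi by rewrite mulmxA mulmxV // mul1mx.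
exists phi0, (N *m xi); split => //; first exact: hPMN.
  rewrite /= hTh ?hPMN // KN; apply/eqP; rewrite -subr_eq0 -mulmxBr -mulmxBr; apply/eqP/key.
  by rewrite mulmxBr eqn mulmxA hPT subrr.
by rewrite hG KN.
Qed.
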